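(* Let $(d,p)\in\{(6,1),(10,2),(13,3),(14,3),(17,4)\}$. Then the function $\varphi$ has a unique maximum on $K$, and it is attained at the point $\mathbf{z}^*$, which lies in the interior of $K$.
   Context: Let $\tau_j=\binom{d}{p}\binom{p}{j}\binom{d-p}{p-j}$ for $0\le j\le p$. Points of $\mathbb{R}^{4p+1}$ are written $\mathbf{z}=(z,(z_{j00},z_{j01},z_{j10},z_{j11})_{j\in[p]})$, and we set $z_{0\alpha\alpha}=z-\sum_{j\in[p]}z_{j\alpha\alpha}$ for $\alpha\in\{0,1\}$ and $z_{0\alpha\beta}=\frac12-z-\sum_{j\in[p]}z_{j\alpha\beta}$ for $\alpha\ne\beta$. Let $K\subset\mathbb{R}^{4p+1}$ be the set of $\mathbf{z}$ with $0\le z\le\frac12$ and $z_{j\alpha\beta}\ge0$ for all $0\le j\le p$, $\alpha,\beta\in\{0,1\}$. Define $A(\mathbf{z})=p+(d-4p)z+\sum_{j\in[p]}j(z_{j00}+z_{j11}-z_{j01}-z_{j10})$, $B(\mathbf{z})=\frac d2-A(\mathbf{z})$, and $$\varphi(\mathbf{z})=A\log A+B\log B+\sum_{\substack{0\le j\le p\\ \alpha,\beta\in\{0,1\}}}\bigl(z_{j\alpha\beta}\log\tau_j-z_{j\alpha\beta}\log z_{j\alpha\beta}\bigr),$$ with the convention $0\log0=0$ (so $\varphi$ is continuous on $K$). The point $\mathbf{z}^*$ has $z^*=\frac14$ and $z^*_{j\alpha\beta}=\frac{\tau_j}{4\binom{d}{p}^2}$ for all $j\in[p]$, $\alpha,\beta\in\{0,1\}$.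 *)

(* Defs.v *)
From HB Require Import structures.
From mathcomp Require Import all_boot all_order all_algebra.
From mathcomp Require Import all_classical all_reals all_analysis.
Set Implicit Arguments. Unset Strict Implicit. Unset Printing Implicit Defensive.
Import Order.TTheory GRing.Theory Num.Theory.
Local Open Scope ring_scope.

Section Defs.
Variable R : realType.
Variables d p : nat.

(* A kpoint of R^{4p+1}: (z, (z_{j a b})) with j in [p] encoded by i : 'I_p
   standing for j = i+1, and bits a, b in {0,1} encoded as false/true. *)
Definition kpoint := (R * {ffun 'I_p * bool * bool -> R})%type.

Definition xlnx (x : R) : R := if x == 0 then 0 else x * ln x.

Definition tau (j : nat) : R := ('C(d, p) * 'C(p, j) * 'C(d - p, p - j))%:R.

Definition z0 (w : kpoint) (a b : bool) : R :=
  if a == b then w.1 - \sum_(i < p) w.2 (i, a, b)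
  else 1 / 2 - w.1 - \sum_(i < p) w.2 (i, a, b).

Definition inK (w : kpoint) : Prop :=
  [/\ 0 <= w.1, w.1 <= 1 / 2,
      (forall a b, 0 <= z0 w a b) &
      (forall i a b, 0 <= w.2 (i, a, b))].

Definition in_interior_K (w : kpoint) : Prop :=
  [/\ 0 < w.1, w.1 < 1 / 2,
      (forall a b, 0 < z0 w a b) &
      (forall i a b, 0 < w.2 (i, a, b))].

Definition Aval (w : kpoint) : R :=
  p%:R + (d%:R - 4 * p%:R) * w.1 +
  \sum_(i < p) (i.+1)%:R *
     (w.2 (i, false, false) + w.2 (i, true, true)
      - w.2 (i, false, true) - w.2 (i, true, false)).

Definition Bval (w : kpoint) : R := d%:R / 2 - Aval w.

Definition phi (w : kpoint) : R :=
  xlnx (Aval w) + xlnx (Bval w)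
  + \sum_(a : bool) \sum_(b : bool) (z0 w a b * ln (tau 0) - xlnx (z0 w a b))
  + \sum_(i < p) \sum_(a : bool) \sum_(b : bool)
        (w.2 (i, a, b) * ln (tau i.+1) - xlnx (w.2 (i, a, b))).

Definition zstar : kpoint :=
  (1 / 4, [ffun k : 'I_p * bool * bool =>
             tau (k.1.1).+1 / (4 * ('C(d, p)%:R) ^+ 2)]).

End Defs.

(* Main.v *)
Require Import Defs.
From HB Require Import structures.
From mathcomp Require Import all_boot all_order all_algebra.
From mathcomp Require Import all_classical all_reals all_analysis.
From mathcomp Require Import ring lra zify.
From Stdlib Require Import Lia.
Import Order.TTheory GRing.Theory Num.Theory.
Local Open Scope ring_scope.
Section Gen.
Variable R : realType.

Lemma ln_lt_sub1 {x : R} : 0 < x -> x != 1 -> ln x < x - 1.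
Proof.
move=> x0 x1.
have sx0 : 0 < Num.sqrt x by rewrite sqrtr_gt0.
have sx : Num.sqrt x ^+ 2 = x by rewrite sqr_sqrtr // ltW.
have h1 : ln (Num.sqrt x) <= Num.sqrt x - 1.
  have := @le_ln1Dx R (Num.sqrt x - 1).
  have -> : 1 + (Num.sqrt x - 1) = Num.sqrt x by ring.
  apply; lra.
have h2 : ln x = (ln (Num.sqrt x)) *+ 2 by rewrite -lnXn // sx.
have sx1 : Num.sqrt x != 1.
  apply/eqP => e; move: x1; rewrite -sx e expr1n eqxx //.
have : 0 < (Num.sqrt x - 1) ^+ 2.
  by rewrite exprn_even_gt0 // subr_eq0.
have e : x - 1 - 2 * (Num.sqrt x - 1) = (Num.sqrt x - 1) ^+ 2.
  by rewrite -{1}sx; ring.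
rewrite h2 mulr2n; lra.
Qed.

Lemma ln_le_sub1 {x : R} : 0 < x -> ln x <= x - 1.
Proof.
move=> x0; have [->|x1] := eqVneq x 1; first by rewrite ln1 subrr.
exact/ltW/ln_lt_sub1.
Qed.

Lemma gibbs_pt (z m M : R) : 0 <= z -> 0 < m -> 0 < M ->
  z * ln m - xlnx z <= z * ln M + m / M - z.
Proof.
move=> z0 m0 M0; rewrite /xlnx.
have [->|zn0] := eqVneq z 0; first by rewrite !mul0r subrr subr0 add0r divr_ge0 // ltW.
have zp : 0 < z by rewrite lt_def zn0.
have q0 : 0 < m / (M * z) by rewrite divr_gt0 // mulr_gt0.
have := ln_le_sub1 q0.
rewrite ln_div ?posrE ?mulr_gt0 // lnM ?posrE //.
move=> h.
have H2 : z * (ln m - (ln M + ln z)) <= z * (m / (M * z) - 1) by rewrite ler_pM2l.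
have e : z * (m / (M * z) - 1) = m / M - z.
  by field; rewrite ?(gt_eqF M0) ?(gt_eqF zp).
rewrite e in H2; lra.
Qed.

Lemma gibbs_pt_lt (z m M : R) : 0 <= z -> 0 < m -> 0 < M -> z != m / M ->
  z * ln m - xlnx z < z * ln M + m / M - z.
Proof.
move=> z0 m0 M0 zne; rewrite /xlnx.
have [ez|zn0] := eqVneq z 0.
  by rewrite ez !mul0r subrr subr0 add0r divr_gt0.
have zp : 0 < z by rewrite lt_def zn0.
have q0 : 0 < m / (M * z) by rewrite divr_gt0 // mulr_gt0.
have q1 : m / (M * z) != 1.
  apply/eqP => e; move/eqP: zne; apply.
  by move: e; rewrite invfM mulrA => /divr1_eq ->.
have := ln_lt_sub1 q0 q1.
rewrite ln_div ?posrE ?mulr_gt0 // lnM ?posrE //.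
move=> h.
have H2 : z * (ln m - (ln M + ln z)) < z * (m / (M * z) - 1) by rewrite ltr_pM2l.
have e : z * (m / (M * z) - 1) = m / M - z.
  by field; rewrite ?(gt_eqF M0) ?(gt_eqF zp).
rewrite e in H2; lra.
Qed.

Lemma sum_lt (I : finType) (F G : I -> R) (i0 : I) :
  (forall i, F i <= G i) -> F i0 < G i0 -> \sum_i F i < \sum_i G i.
Proof.
move=> le lt; rewrite (bigD1 i0) //= [X in _ < X](bigD1 i0) //=.
by apply: ltr_leD => //; apply: ler_sum => i _.
Qed.
End Gen.

Section Fsec.
Variables (R : realType) (d p : nat).

Definition en (j : nat) (a b : bool) : nat :=
  if a == b then (d - 2 * p + 2 * j)%N else (2 * p - 2 * j)%N.

Definition Fs (w : kpoint R p) (h : nat -> R -> bool -> bool -> R) : R :=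
  \sum_(a : bool) \sum_(b : bool) h 0%N (z0 w a b) a b
  + \sum_(i < p) \sum_(a : bool) \sum_(b : bool) h i.+1 (w.2 (i, a, b)) a b.

Definition hh (j : nat) : R := ('C(p, j) * 'C(d - p, p - j))%:R.

Definition Hs (s : R) : R :=
  \sum_(a : bool) \sum_(b : bool) hh 0 * s ^+ en 0 a b
  + \sum_(i < p) \sum_(a : bool) \sum_(b : bool) hh i.+1 * s ^+ en i.+1 a b.

Lemma Fs_expand w h : Fs w h =
  (h 0%N (z0 w true true) true true + h 0%N (z0 w true false) true false
   + h 0%N (z0 w false true) false true + h 0%N (z0 w false false) false false)
  + \sum_(i < p) (h i.+1 (w.2 (i, true, true)) true true
                  + h i.+1 (w.2 (i, true, false)) true false
                  + h i.+1 (w.2 (i, false, true)) false true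
                  + h i.+1 (w.2 (i, false, false)) false false).
Proof.
rewrite /Fs !big_bool /= !addrA; congr (_ + _).
by apply: eq_bigr => i _; rewrite !big_bool /= !addrA.
Qed.

Lemma Fs_add w f g :
  Fs w (fun j z a b => f j z a b + g j z a b) = Fs w f + Fs w g.
Proof.
have E2 : forall (F G : bool -> bool -> R), \sum_(a : bool) \sum_(b : bool) (F a b + G a b)
   = \sum_(a : bool) \sum_(b : bool) F a b + \sum_(a : bool) \sum_(b : bool) G a b.
  by move=> F G; rewrite -big_split; apply: eq_bigr => a _; rewrite big_split.
rewrite /Fs (E2 (fun a b => f 0%N (z0 w a b) a b) (fun a b => g 0%N (z0 w a b) a b)).
rewrite (eq_bigr _ (fun (i : 'I_p) _ => E2 (fun a b => f i.+1 (w.2 (i, a, b)) a b)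
                                 (fun a b => g i.+1 (w.2 (i, a, b)) a b))).
rewrite big_split /=; ring.
Qed.

Lemma Fs_scale w c f :
  Fs w (fun j z a b => c * f j z a b) = c * Fs w f.
Proof.
rewrite !Fs_expand mulrDr mulr_sumr; congr (_ + _); first ring.
by apply: eq_bigr => i _; ring.
Qed.

Lemma Fs_le w f g : inK w ->
  (forall j z a b, (j <= p)%N -> 0 <= z -> f j z a b <= g j z a b) ->
  Fs w f <= Fs w g.
Proof.
case=> _ _ hz0 hz fg; rewrite /Fs; apply: lerD.
  by apply: ler_sum => a _; apply: ler_sum => b _; apply: fg.
apply: ler_sum => i _; apply: ler_sum => a _; apply: ler_sum => b _; apply: fg => //.
Qed.

Lemma Fs_lt (w : kpoint R p) (f g : nat -> R -> bool -> bool -> R) (i0 : 'I_p) (a0 b0 : bool) : inK w ->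
  (forall j z a b, (j <= p)%N -> 0 <= z -> f j z a b <= g j z a b) ->
  f i0.+1 (w.2 (i0, a0, b0)) a0 b0 < g i0.+1 (w.2 (i0, a0, b0)) a0 b0 ->
  Fs w f < Fs w g.
Proof.
case=> _ _ hz0 hz fg lt; rewrite /Fs; apply: ler_ltD.
  by apply: ler_sum => a _; apply: ler_sum => b _; apply: fg.
apply: (@sum_lt R _ _ _ i0) => [i|].
  apply: ler_sum => a _; apply: ler_sum => b _; apply: fg => //.
apply: (@sum_lt R _ _ _ a0) => [a|]; last first.
  apply: (@sum_lt R _ _ _ b0) => [b|] //; apply: fg => //.
apply: ler_sum => b _; apply: fg => //.
Qed.

Lemma Fs1 w : Fs w (fun _ z _ _ => z) = 1.
Proof.
rewrite Fs_expand /z0 /= !big_split /=; lra.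
Qed.


Lemma natE1 j : (j <= p)%N -> (2 * p <= d)%N ->
  ((d - 2 * p + 2 * j)%N%:R : R) = d%:R - 2 * p%:R + 2 * j%:R.
Proof. by move=> jp pd; rewrite natrD natrB // !natrM. Qed.

Lemma natE2 j : (j <= p)%N ->
  ((2 * p - 2 * j)%N%:R : R) = 2 * p%:R - 2 * j%:R.
Proof. by move=> jp; rewrite natrB ?leq_mul2l ?jp ?orbT // !natrM. Qed.

Lemma FsE w : (2 * p <= d)%N ->
  Fs w (fun j z a b => z * (en j a b)%:R) = 2 * Aval d w.
Proof.
move=> pd; rewrite Fs_expand /=.
rewrite (eq_bigr (fun i : 'I_p => (d%:R - 2 * p%:R) * (w.2 (i, true, true) + w.2 (i, false, false))
   + 2 * p%:R * (w.2 (i, true, false) + w.2 (i, false, true))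
   + 2 * ((i.+1)%:R * (w.2 (i, false, false) + w.2 (i, true, true)
                        - w.2 (i, false, true) - w.2 (i, true, false))))); last first.
  move=> i _; have ip := ltn_ord i; rewrite /en /= !natE1 ?natE2 //; ring.
rewrite !big_split /= -!mulr_sumr !big_split /=.
rewrite /Aval /z0 /en /= !natE1 ?natE2 //. by field.
Qed.

Lemma hh_gt0 j : (j <= p)%N -> (2 * p <= d)%N -> 0 < hh j.
Proof.
move=> jp pd; rewrite /hh ltr0n muln_gt0 !bin_gt0 jp /=.
by apply: leq_trans (leq_subr _ _) _; rewrite leq_subRL; lia.
Qed.

Lemma Hs_gt0 s : (2 * p <= d)%N -> 0 < s -> 0 < Hs s.
Proof.
move=> pd s0; rewrite /Hs; apply: ltr_wpDr.
  apply: sumr_ge0 => i _; apply: sumr_ge0 => a _; apply: sumr_ge0 => b _.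
  by rewrite mulr_ge0 ?exprn_ge0 ?ltW ?hh_gt0.
rewrite !big_bool /=.
by rewrite !addr_gt0 ?mulr_gt0 ?exprn_gt0 ?hh_gt0.
Qed.

Lemma Fs_lin w s (c1 c2 c3 : R) :
  Fs w (fun j z a b => c1 * z + c2 * (hh j * s ^+ en j a b) + c3 * (z * (en j a b)%:R))
  = c1 * Fs w (fun _ z _ _ => z) + c2 * Hs s + c3 * Fs w (fun j z a b => z * (en j a b)%:R).
Proof.
rewrite (Fs_add w (fun j z a b => c1 * z + c2 * (hh j * s ^+ en j a b))
                  (fun j z a b => c3 * (z * (en j a b)%:R))).
rewrite (Fs_add w (fun j z a b => c1 * z) (fun j z a b => c2 * (hh j * s ^+ en j a b))).
rewrite (Fs_scale w c1 (fun _ z _ _ => z)) (Fs_scale w c3 (fun j z a b => z * (en j a b)%:R)).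
by rewrite (Fs_scale w c2 (fun j _ a b => hh j * s ^+ en j a b)).
Qed.

Lemma tauE j : tau R d p j = 'C(d, p)%:R * hh j.
Proof. by rewrite /tau /hh -natrM mulnA. Qed.

Lemma phiE w : phi d w = xlnx (Aval d w) + xlnx (Bval d w)
  + Fs w (fun j z a b => z * ln (tau R d p j) - xlnx z).
Proof. rewrite /phi /Fs. by rewrite addrA. Qed.

Definition gbound (w : kpoint R p) (s : R) := xlnx (Aval d w) + xlnx (Bval d w) + ln ('C(d, p)%:R : R)
  + ln (Hs s) - 2 * Aval d w * ln s.

Lemma gibbs_pt2 j z a b s : (j <= p)%N -> (2 * p <= d)%N -> 0 < s -> 0 <= z ->
  z * ln (tau R d p j) - xlnx z <=
  (ln ('C(d, p)%:R : R) + ln (Hs s) - 1) * z + (Hs s)^-1 * (hh j * s ^+ en j a b)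
   + (- ln s) * (z * (en j a b)%:R).
Proof.
move=> jp pd s0 z0.
have C0 : (0 : R) < 'C(d, p)%:R by rewrite ltr0n bin_gt0; lia.
have h0 := @hh_gt0 j jp pd.
have m0 : 0 < hh j * s ^+ en j a b by rewrite mulr_gt0 ?exprn_gt0.
have := @gibbs_pt R _ _ _ z0 m0 (Hs_gt0 s pd s0).
have e1 : ln (hh j * s ^+ en j a b) = ln (hh j) + ln s * (en j a b)%:R.
  by rewrite lnM ?posrE ?exprn_gt0 // lnXn // mulr_natr.
have e2 : ln ('C(d, p)%:R * hh j) = ln ('C(d, p)%:R : R) + ln (hh j).
  by rewrite lnM ?posrE.
rewrite tauE e1 e2 => h; rewrite mulrC; lra.
Qed.

Lemma gibbs w s : inK w -> (2 * p <= d)%N -> 0 < s -> phi d w <= gbound w s.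
Proof.
move=> wK pd s0; rewrite phiE /gbound.
have := @Fs_le w _ _ wK (fun j z a b jp z0 => @gibbs_pt2 j z a b s jp pd s0 z0).
rewrite Fs_lin Fs1 FsE // => h.
have Hn0 : Hs s != 0 by rewrite gt_eqF // Hs_gt0.
rewrite mulVf // in h; lra.
Qed.


Lemma gibbs_pt2_lt j z a b s : (j <= p)%N -> (2 * p <= d)%N -> 0 < s -> 0 <= z ->
  z != hh j * s ^+ en j a b / Hs s ->
  z * ln (tau R d p j) - xlnx z <
  (ln ('C(d, p)%:R : R) + ln (Hs s) - 1) * z + (Hs s)^-1 * (hh j * s ^+ en j a b)
   + (- ln s) * (z * (en j a b)%:R).
Proof.
move=> jp pd s0 z0 zne.
have C0 : (0 : R) < 'C(d, p)%:R by rewrite ltr0n bin_gt0; lia.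
have h0 := @hh_gt0 j jp pd.
have m0 : 0 < hh j * s ^+ en j a b by rewrite mulr_gt0 ?exprn_gt0.
have := @gibbs_pt_lt R _ _ _ z0 m0 (Hs_gt0 s pd s0) zne.
have e1 : ln (hh j * s ^+ en j a b) = ln (hh j) + ln s * (en j a b)%:R.
  by rewrite lnM ?posrE ?exprn_gt0 // lnXn // mulr_natr.
have e2 : ln ('C(d, p)%:R * hh j) = ln ('C(d, p)%:R : R) + ln (hh j).
  by rewrite lnM ?posrE.
rewrite tauE e1 e2 => h; rewrite mulrC; lra.
Qed.

Lemma gibbs_lt w s (i0 : 'I_p) (a0 b0 : bool) : inK w -> (2 * p <= d)%N -> 0 < s ->
  w.2 (i0, a0, b0) != hh i0.+1 * s ^+ en i0.+1 a0 b0 / Hs s ->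
  phi d w < gbound w s.
Proof.
move=> wK pd s0 ne; rewrite phiE /gbound.
have wK' := wK; case: wK' => _ _ _ hz.
have := @Fs_lt w _ _ i0 a0 b0 wK (fun j z a b jp z0 => @gibbs_pt2 j z a b s jp pd s0 z0)
  (@gibbs_pt2_lt i0.+1 _ a0 b0 s (ltn_ord i0) pd s0 (hz i0 a0 b0) ne).
rewrite Fs_lin Fs1 FsE // => h.
have Hn0 : Hs s != 0 by rewrite gt_eqF // Hs_gt0.
rewrite mulVf // in h; lra.
Qed.

Lemma en_le j a b : (j <= p)%N -> (2 * p <= d)%N -> (en j a b <= d)%N.
Proof. by rewrite /en; case: (a == b) => jp pd; lia. Qed.

Lemma Aval_ge0 (w : kpoint R p) : inK w -> (2 * p <= d)%N -> 0 <= Aval d w.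
Proof.
move=> wK pd.
have := @Fs_le w (fun j z a b => 0 * z) (fun j z a b => z * (en j a b)%:R) wK.
rewrite Fs_scale FsE // mul0r => h.
suff : 0 <= 2 * Aval d w by lra.
by apply: h => j z a b jp z0; rewrite mul0r mulr_ge0 ?ler0n.
Qed.

Lemma Bval_ge0 (w : kpoint R p) : inK w -> (2 * p <= d)%N -> 0 <= Bval d w.
Proof.
move=> wK pd.
have := @Fs_le w (fun j z a b => 0 * z)
   (fun j z a b => d%:R * z + (-1) * (z * (en j a b)%:R)) wK.
rewrite Fs_scale mul0r.
rewrite (Fs_add w (fun j z a b => d%:R * z) (fun j z a b => (-1) * (z * (en j a b)%:R))).
rewrite (Fs_scale w d%:R (fun _ z _ _ => z)) (Fs_scale w (-1) (fun j z a b => z * (en j a b)%:R)).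
rewrite Fs1 FsE // /Bval => h.
suff : 0 <= d%:R * 1 + -1 * (2 * Aval d w) by lra.
apply: h => j z a b jp z0; rewrite mul0r mulN1r.
have : z * (en j a b)%:R <= z * d%:R by rewrite ler_wpM2l // ler_nat en_le.
lra.
Qed.


Lemma C_gt0 : (2 * p <= d)%N -> (0 : R) < 'C(d, p)%:R.
Proof. by move=> pd; rewrite ltr0n bin_gt0; lia. Qed.

Lemma zstar2 i a b : (2 * p <= d)%N ->
  (zstar R d p).2 (i, a, b) = hh i.+1 / (4 * 'C(d, p)%:R).
Proof.
move=> pd; have C0 := C_gt0 pd.
rewrite /zstar ffunE /= tauE; field.
by rewrite gt_eqF.
Qed.

Lemma zstar0 a b : (2 * p <= d)%N ->
  hh 0 + \sum_(i < p) hh i.+1 = 'C(d, p)%:R ->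
  z0 (zstar R d p) a b = hh 0 / (4 * 'C(d, p)%:R).
Proof.
move=> pd vand; have C0 := C_gt0 pd.
rewrite /z0 (eq_bigr (fun i : 'I_p => hh i.+1 / (4 * 'C(d, p)%:R))); last first.
  by move=> i _; rewrite zstar2.
rewrite -mulr_suml (_ : \sum_(i < p) hh i.+1 = 'C(d, p)%:R - hh 0); last by lra.
by case: (a == b) => /=; field; rewrite gt_eqF.
Qed.

Lemma Aval_star : (2 * p <= d)%N -> Aval d (zstar R d p) = d%:R / 4.
Proof.
move=> pd; rewrite /Aval big1; last by move=> i _; rewrite !zstar2 //; ring.
by rewrite /=; field.
Qed.

Lemma Fs_star f g : (2 * p <= d)%N ->
  hh 0 + \sum_(i < p) hh i.+1 = 'C(d, p)%:R ->
  (forall j a b, (j <= p)%N -> f j (hh j / (4 * 'C(d, p)%:R)) a b = g j (hh j / (4 * 'C(d, p)%:R)) a b) ->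
  Fs (zstar R d p) f = Fs (zstar R d p) g.
Proof.
move=> pd vand fg; rewrite /Fs; congr (_ + _).
  by apply: eq_bigr => a _; apply: eq_bigr => b _; rewrite zstar0 //; apply: fg.
apply: eq_bigr => i _; apply: eq_bigr => a _; apply: eq_bigr => b _.
by rewrite zstar2 //; apply: fg; exact: ltn_ord.
Qed.

Lemma xlnx_pos (x : R) : 0 < x -> xlnx x = x * ln x.
Proof. by move=> x0; rewrite /xlnx gt_eqF. Qed.

Lemma phi_star : (2 * p <= d)%N ->
  hh 0 + \sum_(i < p) hh i.+1 = 'C(d, p)%:R ->
  phi d (zstar R d p) = 2 * xlnx (d%:R / 4) + ln ('C(d, p)%:R : R) + ln (4 * 'C(d, p)%:R).
Proof.
move=> pd vand; have C0 := C_gt0 pd.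
rewrite phiE /Bval Aval_star //.
rewrite (@Fs_star _ (fun j z a b => (ln ('C(d, p)%:R : R) + ln (4 * 'C(d, p)%:R)) * z)) //; last first.
  move=> j a b jp; have h0 := @hh_gt0 j jp pd.
  have z0 : 0 < hh j / (4 * 'C(d, p)%:R) by rewrite divr_gt0 // mulr_gt0.
  rewrite xlnx_pos // tauE lnM ?posrE // ln_div ?posrE ?mulr_gt0 //; ring.
rewrite (Fs_scale _ _ (fun _ z _ _ => z)) Fs1 mulr1.
have -> : d%:R / 2 - d%:R / 4 = d%:R / 4 :> R by field.
ring.
Qed.

Lemma ln_pp (x y : R) n m : 0 < x -> 0 < y ->
  ln (x ^+ n * y ^+ m) = n%:R * ln x + m%:R * ln y.
Proof.
by move=> x0 y0; rewrite lnM ?posrE ?exprn_gt0 // !lnXn // !mulr_natl.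
Qed.

Lemma ln_ppp (x y z : R) n m k : 0 < x -> 0 < y -> 0 < z ->
  ln (x ^+ n * y ^+ m * z ^+ k) = n%:R * ln x + m%:R * ln y + k%:R * ln z.
Proof.
move=> x0 y0 z0; rewrite lnM ?posrE ?mulr_gt0 ?exprn_gt0 // ln_pp // lnXn //.
by rewrite [k%:R * _]mulr_natl.
Qed.

End Fsec.

Lemma main_gen (R : realType) (d p : nat) :
  (2 * p <= d)%N -> (d != 4 * p)%N ->
  hh R d p 0 + \sum_(i < p) hh R d p i.+1 = 'C(d, p)%:R ->
  Hs R d p 1 = 4 * 'C(d, p)%:R ->
  (forall s : R, 0 < s -> s != 1 ->
     2 ^+ d * (Hs R d p s) ^+ 2 < 16 * ('C(d, p)%:R) ^+ 2 * (1 + s ^+ 2) ^+ d) ->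
  2 ^+ d * (Hs R d p (1 / 4)) ^+ 2 < 16 * ('C(d, p)%:R) ^+ 2 ->
  2 ^+ d * (Hs R d p 4) ^+ 2 < 16 * ('C(d, p)%:R) ^+ 2 * 4 ^+ (2 * d) ->
  [/\ @inK R p (zstar R d p),
      (forall w : kpoint R p, @inK R p w -> w <> zstar R d p ->
         @phi R d p w < @phi R d p (zstar R d p)) &
      @in_interior_K R p (zstar R d p)].
Proof.
move=> pd d4p vand H1 poly bnd0 bnd1.
have C0 := C_gt0 R d p pd.
set C : R := 'C(d, p)%:R in C0 vand H1 poly bnd0 bnd1 *.
have Hint : in_interior_K (zstar R d p).
  split => /=; first lra; first lra.
    move=> a b; rewrite zstar0 // divr_gt0 ?mulr_gt0 //.
    exact: hh_gt0.
  move=> i a b; rewrite zstar2 // divr_gt0 ?mulr_gt0 //.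
  exact: hh_gt0 R d p _ (ltn_ord i) pd.
have HK : inK (zstar R d p).
  case: Hint => h1 h2 h3 h4; split; first exact: ltW.
  - exact: ltW.
  - by move=> a b; apply: ltW.
  - by move=> i a b; apply: ltW.
split => // w wK wne.
rewrite phi_star //.
have A0 := Aval_ge0 R d p w wK pd; have B0 := Bval_ge0 R d p w wK pd.
have d0 : (0 : R) < d%:R by rewrite ltr0n; move: d4p pd; clear; lia.
have ln4 : ln (4 : R) = 2 * ln 2.
  by rewrite (_ : (4 : R) = 2 ^+ 2); [rewrite lnXn // mulr_natl | ring].
have lnd4 : ln (d%:R / 4 : R) = ln (d%:R / 2) - ln 2.
  by rewrite (_ : d%:R / 4 = (d%:R / 2) / 2 :> R) ?ln_div ?posrE ?divr_gt0 //; field.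
have x4 : xlnx (d%:R / 4 : R) = d%:R / 4 * ln (d%:R / 4) by rewrite xlnx_pos ?divr_gt0.
have x2 : xlnx (d%:R / 2 : R) = d%:R / 2 * ln (d%:R / 2) by rewrite xlnx_pos ?divr_gt0.
have x0 : xlnx (0 : R) = 0 by rewrite /xlnx eqxx.
have l4C : ln (4 * C) = 2 * ln 2 + ln C by rewrite lnM ?posrE // ln4.
have e16 : (16 : R) = 2 ^+ 4 by ring.
rewrite x4 lnd4 l4C.
have [Ae0|Apos] := eqVneq (Aval d w) 0.
  have Hp : 0 < Hs R d p (1 / 4) by apply: Hs_gt0 => //; lra.
  have := gibbs R d p w (1/4) wK pd (ltac:(lra)); rewrite /gbound /Bval Ae0 subr0 x0 x2 => hg.
  have : ln (2 ^+ d * (Hs R d p (1 / 4)) ^+ 2) < ln (2 ^+ 4 * C ^+ 2).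
    by rewrite ltr_ln ?posrE ?mulr_gt0 ?exprn_gt0 // -e16.
  rewrite !ln_pp // => hb.
  lra.
have Apos' : 0 < Aval d w by rewrite lt_def Apos.
have [Be0|Bpos] := eqVneq (Bval d w) 0.
  have Ad : Aval d w = d%:R / 2 by move: Be0; rewrite /Bval; lra.
  have Hp : 0 < Hs R d p 4 by apply: Hs_gt0 => //; lra.
  have := gibbs R d p w 4 wK pd (ltac:(lra)); rewrite /gbound Be0 x0 Ad x2 ln4 => hg.
  have : ln (2 ^+ d * (Hs R d p 4) ^+ 2) < ln (2 ^+ 4 * C ^+ 2 * 4 ^+ (2 * d)).
    by rewrite ltr_ln ?posrE ?mulr_gt0 ?exprn_gt0 // -e16.
  rewrite ln_pp // ln_ppp // natrM ln4 => hb.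
  lra.
have Bpos' : 0 < Bval d w by rewrite lt_def Bpos.
have AB2 : Aval d w + Bval d w = d%:R / 2 by rewrite /Bval; ring.
have [AB|AnB] := eqVneq (Aval d w) (Bval d w).
  have Ad : Aval d w = d%:R / 4 by move: AB2; rewrite AB; lra.
  have Bd : Bval d w = d%:R / 4 by rewrite -AB.
  have Hg : gbound R d p w 1 = 2 * (d%:R / 4 * (ln (d%:R / 2) - ln 2)) + ln C + (2 * ln 2 + ln C).
    by rewrite /gbound Ad Bd x4 lnd4 H1 l4C ln1; ring.
  rewrite -Hg.
  case: (pselect (exists i a b, w.2 (i, a, b) != hh R d p i.+1 * 1 ^+ en d p i.+1 a b / Hs R d p 1))
    => [[i [a [b hne]]]|hall].
    exact: gibbs_lt R d p w 1 i a b wK pd ltr01 hne.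
  exfalso; apply: wne.
  have eq2 : forall i a b, w.2 (i, a, b) = (zstar R d p).2 (i, a, b).
    move=> i a b; rewrite zstar2 //.
    case: (eqVneq (w.2 (i, a, b)) (hh R d p i.+1 * 1 ^+ en d p i.+1 a b / Hs R d p 1)) => [->|hne].
      by rewrite expr1n mulr1 H1.
    by exfalso; apply: hall; exists i, a, b.
  have w1 : w.1 = 1 / 4.
    move: Ad; rewrite /Aval big1; last by move=> i _; rewrite !eq2 !zstar2 //; ring.
    move=> h.
    have : (d%:R - 4 * p%:R) * (w.1 - 1 / 4) = 0 :> R by lra.
    move/eqP; rewrite mulf_eq0 subr_eq0 => /orP [/eqP hd|/eqP e]; last lra.
    have : d%:R = (4 * p)%:R :> R by rewrite natrM; lra.
    by move/eqP; rewrite eqr_nat (negbTE d4p).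
  rewrite (surjective_pairing w) w1 /zstar; congr pair.
  by apply/ffunP => [[[i a] b]]; rewrite eq2.
have xA : xlnx (Aval d w) = Aval d w * ln (Aval d w) by rewrite xlnx_pos.
have xB : xlnx (Bval d w) = Bval d w * ln (Bval d w) by rewrite xlnx_pos.
pose s := Num.sqrt (Aval d w / Bval d w).
have s0 : 0 < s by rewrite sqrtr_gt0 divr_gt0.
have ss : s ^+ 2 = Aval d w / Bval d w by rewrite sqr_sqrtr // divr_ge0 // ltW.
have s1 : s != 1.
  apply/eqP => e; move: ss; rewrite e expr1n => h.
  move/eqP: AnB; apply.
  by move: (congr1 (fun x => x * Bval d w) h); rewrite mul1r divfK ?gt_eqF // => ->.
have lns : 2 * ln s = ln (Aval d w) - ln (Bval d w).
  have := lnXn 2 s0; rewrite ss ln_div ?posrE // => h.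
  by rewrite h mulr_natl.
have B1 : Bval d w * (1 + s ^+ 2) = d%:R / 2.
  by rewrite ss mulrDr mulr1 mulrC divfK ?gt_eqF // addrC.
have s2 : 0 < 1 + s ^+ 2 by rewrite ltr_pwDl ?exprn_ge0 ?ltW.
have lnB : ln (Bval d w) + ln (1 + s ^+ 2) = ln (d%:R / 2).
  by rewrite -lnM ?posrE // B1.
have Hp : 0 < Hs R d p s by apply: Hs_gt0.
have := gibbs R d p w s wK pd s0; rewrite /gbound xA xB => hg.
have e2 : 2 * Aval d w * ln s = Aval d w * ln (Aval d w) - Aval d w * ln (Bval d w).
  by rewrite (_ : 2 * Aval d w * ln s = Aval d w * (2 * ln s)); [rewrite lns; ring | ring].
have e3 : Aval d w * ln (Bval d w) + Bval d w * ln (Bval d w) = d%:R / 2 * ln (Bval d w).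
  by rewrite -mulrDl AB2.
have e5 : d%:R / 2 * ln (Bval d w) = d%:R / 2 * ln (d%:R / 2) - d%:R / 2 * ln (1 + s ^+ 2).
  by rewrite -lnB; ring.
have : ln (2 ^+ d * (Hs R d p s) ^+ 2) < ln (2 ^+ 4 * C ^+ 2 * (1 + s ^+ 2) ^+ d).
  by rewrite ltr_ln ?posrE ?mulr_gt0 ?exprn_gt0 // -e16; apply: poly.
rewrite ln_pp // ln_ppp // => hb.
lra.
Qed.

Ltac natnorm := repeat match goal with
 | |- context [ GRing.natmul _ ?n ] =>
   lazymatch n with O => fail | S _ => fail | _ =>
     let m := eval vm_compute in n in change n with m end
 | |- context [ GRing.exp _ ?n ] =>
   lazymatch n with O => fail | S _ => fail | _ =>
     let m := eval vm_compute in n in change n with m end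
 end.

Ltac nn := match goal with
 | |- is_true (0 <= (_ - _) ^+ 2) => exact: sqr_ge0
 | |- is_true (0 <= _ * _) => apply: mulr_ge0; nn
 | |- is_true (0 <= _ + _) => apply: addr_ge0; nn
 | |- is_true (0 <= _ ^+ _) => apply: exprn_ge0; nn
 | |- is_true (0 <= GRing.natmul _ _) => exact: ler0n
 | |- is_true (0 <= 0) => exact: lexx
 | |- is_true (0 <= 1) => exact: ler01
 | |- _ => assumption
 end.

Lemma HsE_6_1 (R : realType) (s : R) : Hs R 6 1 s = 2 * s ^+ 0 + 10 * s ^+ 2 + 10 * s ^+ 4 + 2 * s ^+ 6.
Proof. rewrite /Hs /hh /en !big_ord_recr big_ord0 !big_bool /=; natnorm; ring. Qed.

Lemma poly_6_1 (R : realType) (s : R) : 0 < s -> s != 1 ->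
  2 ^+ 6 * (Hs R 6 1 s) ^+ 2 < 16 * ('C(6, 1)%:R) ^+ 2 * (1 + s ^+ 2) ^+ 6.
Proof.
move=> s0 s1; rewrite HsE_6_1; natnorm.
have s0' : 0 <= s by apply: ltW.
have c1 : 0 < ((24 * 1000 + 576) : R) by lra.
have e : 16 * (6 : R) ^+ 2 * (1 + s ^+ 2) ^+ 6 - 2 ^+ 6 * (2 * s ^+ 0 + 10 * s ^+ 2 + 10 * s ^+ 4 + 2 * s ^+ 6) ^+ 2
  = (24 * 1000 + 576) * ((s - 1) ^+ 2 * s ^+ 5) + ((51 * 1000 + 200) * (((s - 1) ^+ 2) ^+ 2 * s ^+ 4) + (43 * 1000 + 8) * (((s - 1) ^+ 2) ^+ 3 * s ^+ 3) + (18 * 1000 + 176) * (((s - 1) ^+ 2) ^+ 4 * s ^+ 2) + (3 * 1000 + 840) * (((s - 1) ^+ 2) ^+ 5 * s ^+ 1) + 320 * (((s - 1) ^+ 2) ^+ 6 * s ^+ 0)).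
  ring.
have t1 : 0 < (24 * 1000 + 576) * ((s - 1) ^+ 2 * s ^+ 5).
  apply: mulr_gt0; first exact: c1.
  by apply: mulr_gt0; [rewrite exprn_even_gt0 // subr_eq0 | apply: exprn_gt0].
have t2 : 0 <= (51 * 1000 + 200) * (((s - 1) ^+ 2) ^+ 2 * s ^+ 4) + (43 * 1000 + 8) * (((s - 1) ^+ 2) ^+ 3 * s ^+ 3) + (18 * 1000 + 176) * (((s - 1) ^+ 2) ^+ 4 * s ^+ 2) + (3 * 1000 + 840) * (((s - 1) ^+ 2) ^+ 5 * s ^+ 1) + 320 * (((s - 1) ^+ 2) ^+ 6 * s ^+ 0) by nn.
by rewrite -subr_gt0 e; exact: ltr_wpDr t2 t1.
Qed.

Lemma vand_6_1 (R : realType) : hh R 6 1 0 + \sum_(i < 1) hh R 6 1 i.+1 = 'C(6, 1)%:R.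
Proof. rewrite /hh !big_ord_recr big_ord0 /=; natnorm; ring. Qed.

Lemma H1_6_1 (R : realType) : Hs R 6 1 1 = 4 * 'C(6, 1)%:R.
Proof. rewrite HsE_6_1; natnorm; ring. Qed.

Lemma bnd0_6_1 (R : realType) :
  2 ^+ 6 * (Hs R 6 1 (1 / 4)) ^+ 2 < 16 * ('C(6, 1)%:R) ^+ 2.
Proof. rewrite HsE_6_1; natnorm; lra. Qed.

Lemma bnd1_6_1 (R : realType) :
  2 ^+ 6 * (Hs R 6 1 4) ^+ 2 < 16 * ('C(6, 1)%:R) ^+ 2 * 4 ^+ (2 * 6).
Proof. rewrite HsE_6_1; natnorm; lra. Qed.

Lemma case_6_1 (R : realType) :
  [/\ @inK R 1 (zstar R 6 1),
      (forall w : kpoint R 1, @inK R 1 w -> w <> zstar R 6 1 ->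
         @phi R 6 1 w < @phi R 6 1 (zstar R 6 1)) &
      @in_interior_K R 1 (zstar R 6 1)].
Proof.
apply: main_gen => //.
- exact: vand_6_1.
- exact: H1_6_1.
- exact: poly_6_1.
- exact: bnd0_6_1.
- exact: bnd1_6_1.
Qed.

Lemma HsE_10_2 (R : realType) (s : R) : Hs R 10 2 s = 2 * s ^+ 0 + 32 * s ^+ 2 + 56 * s ^+ 4 + 56 * s ^+ 6 + 32 * s ^+ 8 + 2 * s ^+ 10.
Proof. rewrite /Hs /hh /en !big_ord_recr big_ord0 !big_bool /=; natnorm; ring. Qed.

Lemma poly_10_2 (R : realType) (s : R) : 0 < s -> s != 1 ->
  2 ^+ 10 * (Hs R 10 2 s) ^+ 2 < 16 * ('C(10, 2)%:R) ^+ 2 * (1 + s ^+ 2) ^+ 10.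
Proof.
move=> s0 s1; rewrite HsE_10_2; natnorm.
have s0' : 0 <= s by apply: ltW.
have c1 : 0 < (((20 * 1000 + 643) * 1000 + 840) : R) by lra.
have e : 16 * (45 : R) ^+ 2 * (1 + s ^+ 2) ^+ 10 - 2 ^+ 10 * (2 * s ^+ 0 + 32 * s ^+ 2 + 56 * s ^+ 4 + 56 * s ^+ 6 + 32 * s ^+ 8 + 2 * s ^+ 10) ^+ 2
  = ((20 * 1000 + 643) * 1000 + 840) * ((s - 1) ^+ 2 * s ^+ 9) + (((106 * 1000 + 643) * 1000 + 456) * (((s - 1) ^+ 2) ^+ 2 * s ^+ 8) + ((224 * 1000 + 444) * 1000 + 416) * (((s - 1) ^+ 2) ^+ 3 * s ^+ 7) + ((258 * 1000 + 467) * 1000 + 840) * (((s - 1) ^+ 2) ^+ 4 * s ^+ 6) + ((183 * 1000 + 400) * 1000 + 448) * (((s - 1) ^+ 2) ^+ 5 * s ^+ 5) + ((84 * 1000 + 636) * 1000 + 160) * (((s - 1) ^+ 2) ^+ 6 * s ^+ 4) + ((25 * 1000 + 730) * 1000 + 48) * (((s - 1) ^+ 2) ^+ 7 * s ^+ 3) + ((5 * 1000 + 4) * 1000 + 608) * (((s - 1) ^+ 2) ^+ 8 * s ^+ 2) + (566 * 1000 + 80) * (((s - 1) ^+ 2) ^+ 9 * s ^+ 1) + (28 * 1000 + 304) * (((s - 1) ^+ 2) ^+ 10 * s ^+ 0)).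
  ring.
have t1 : 0 < ((20 * 1000 + 643) * 1000 + 840) * ((s - 1) ^+ 2 * s ^+ 9).
  apply: mulr_gt0; first exact: c1.
  by apply: mulr_gt0; [rewrite exprn_even_gt0 // subr_eq0 | apply: exprn_gt0].
have t2 : 0 <= ((106 * 1000 + 643) * 1000 + 456) * (((s - 1) ^+ 2) ^+ 2 * s ^+ 8) + ((224 * 1000 + 444) * 1000 + 416) * (((s - 1) ^+ 2) ^+ 3 * s ^+ 7) + ((258 * 1000 + 467) * 1000 + 840) * (((s - 1) ^+ 2) ^+ 4 * s ^+ 6) + ((183 * 1000 + 400) * 1000 + 448) * (((s - 1) ^+ 2) ^+ 5 * s ^+ 5) + ((84 * 1000 + 636) * 1000 + 160) * (((s - 1) ^+ 2) ^+ 6 * s ^+ 4) + ((25 * 1000 + 730) * 1000 + 48) * (((s - 1) ^+ 2) ^+ 7 * s ^+ 3) + ((5 * 1000 + 4) * 1000 + 608) * (((s - 1) ^+ 2) ^+ 8 * s ^+ 2) + (566 * 1000 + 80) * (((s - 1) ^+ 2) ^+ 9 * s ^+ 1) + (28 * 1000 + 304) * (((s - 1) ^+ 2) ^+ 10 * s ^+ 0) by nn.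
by rewrite -subr_gt0 e; exact: ltr_wpDr t2 t1.
Qed.

Lemma vand_10_2 (R : realType) : hh R 10 2 0 + \sum_(i < 2) hh R 10 2 i.+1 = 'C(10, 2)%:R.
Proof. rewrite /hh !big_ord_recr big_ord0 /=; natnorm; ring. Qed.

Lemma H1_10_2 (R : realType) : Hs R 10 2 1 = 4 * 'C(10, 2)%:R.
Proof. rewrite HsE_10_2; natnorm; ring. Qed.

Lemma bnd0_10_2 (R : realType) :
  2 ^+ 10 * (Hs R 10 2 (1 / 4)) ^+ 2 < 16 * ('C(10, 2)%:R) ^+ 2.
Proof. rewrite HsE_10_2; natnorm; lra. Qed.

Lemma bnd1_10_2 (R : realType) :
  2 ^+ 10 * (Hs R 10 2 4) ^+ 2 < 16 * ('C(10, 2)%:R) ^+ 2 * 4 ^+ (2 * 10).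
Proof. rewrite HsE_10_2; natnorm; lra. Qed.

Lemma case_10_2 (R : realType) :
  [/\ @inK R 2 (zstar R 10 2),
      (forall w : kpoint R 2, @inK R 2 w -> w <> zstar R 10 2 ->
         @phi R 10 2 w < @phi R 10 2 (zstar R 10 2)) &
      @in_interior_K R 2 (zstar R 10 2)].
Proof.
apply: main_gen => //.
- exact: vand_10_2.
- exact: H1_10_2.
- exact: poly_10_2.
- exact: bnd0_10_2.
- exact: bnd1_10_2.
Qed.

Lemma HsE_13_3 (R : realType) (s : R) : Hs R 13 3 s = 2 * s ^+ 0 + 60 * s ^+ 2 + 270 * s ^+ 4 + 240 * s ^+ 6 + 240 * s ^+ 7 + 270 * s ^+ 9 + 60 * s ^+ 11 + 2 * s ^+ 13.
Proof. rewrite /Hs /hh /en !big_ord_recr big_ord0 !big_bool /=; natnorm; ring. Qed.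

Lemma poly_13_3 (R : realType) (s : R) : 0 < s -> s != 1 ->
  2 ^+ 13 * (Hs R 13 3 s) ^+ 2 < 16 * ('C(13, 3)%:R) ^+ 2 * (1 + s ^+ 2) ^+ 13.
Proof.
move=> s0 s1; rewrite HsE_13_3; natnorm.
have s0' : 0 <= s by apply: ltW.
have c1 : 0 < ((((12 * 1000 + 576) * 1000 + 751) * 1000 + 616) : R) by lra.
have e : 16 * (286 : R) ^+ 2 * (1 + s ^+ 2) ^+ 13 - 2 ^+ 13 * (2 * s ^+ 0 + 60 * s ^+ 2 + 270 * s ^+ 4 + 240 * s ^+ 6 + 240 * s ^+ 7 + 270 * s ^+ 9 + 60 * s ^+ 11 + 2 * s ^+ 13) ^+ 2
  = (((12 * 1000 + 576) * 1000 + 751) * 1000 + 616) * ((s - 1) ^+ 2 * s ^+ 12) + ((((77 * 1000 + 262) * 1000 + 749) * 1000 + 696) * (((s - 1) ^+ 2) ^+ 2 * s ^+ 11) + (((207 * 1000 + 34) * 1000 + 122) * 1000 + 240) * (((s - 1) ^+ 2) ^+ 3 * s ^+ 10) + (((324 * 1000 + 617) * 1000 + 994) * 1000 + 240) * (((s - 1) ^+ 2) ^+ 4 * s ^+ 9) + (((336 * 1000 + 160) * 1000 + 47) * 1000 + 104) * (((s - 1) ^+ 2) ^+ 5 * s ^+ 8) + (((244 * 1000 + 690) * 1000 + 747) * 1000 + 392) * (((s - 1) ^+ 2) ^+ 6 * s ^+ 7) + (((129 * 1000 + 277) * 1000 + 378) * 1000 + 560) * (((s - 1) ^+ 2) ^+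 7 * s ^+ 6) + (((50 * 1000 + 177) * 1000 + 390) * 1000 + 592) * (((s - 1) ^+ 2) ^+ 8 * s ^+ 5) + (((14 * 1000 + 239) * 1000 + 411) * 1000 + 200) * (((s - 1) ^+ 2) ^+ 9 * s ^+ 4) + (((2 * 1000 + 885) * 1000 + 532) * 1000 + 672) * (((s - 1) ^+ 2) ^+ 10 * s ^+ 3) + ((396 * 1000 + 561) * 1000 + 920) * (((s - 1) ^+ 2) ^+ 11 * s ^+ 2) + ((33 * 1000 + 175) * 1000 + 168) * (((s - 1) ^+ 2) ^+ 12 * s ^+ 1) + ((1 * 1000 + 275) * 1000 + 968) * (((s - 1) ^+ 2) ^+ 13 * s ^+ 0)).
  ring.
have t1 : 0 < (((12 * 1000 + 576) * 1000 + 751) * 1000 + 616) * ((s - 1) ^+ 2 * s ^+ 12).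
  apply: mulr_gt0; first exact: c1.
  by apply: mulr_gt0; [rewrite exprn_even_gt0 // subr_eq0 | apply: exprn_gt0].
have t2 : 0 <= (((77 * 1000 + 262) * 1000 + 749) * 1000 + 696) * (((s - 1) ^+ 2) ^+ 2 * s ^+ 11) + (((207 * 1000 + 34) * 1000 + 122) * 1000 + 240) * (((s - 1) ^+ 2) ^+ 3 * s ^+ 10) + (((324 * 1000 + 617) * 1000 + 994) * 1000 + 240) * (((s - 1) ^+ 2) ^+ 4 * s ^+ 9) + (((336 * 1000 + 160) * 1000 + 47) * 1000 + 104) * (((s - 1) ^+ 2) ^+ 5 * s ^+ 8) + (((244 * 1000 + 690) * 1000 + 747) * 1000 + 392) * (((s - 1) ^+ 2) ^+ 6 * s ^+ 7) + (((129 * 1000 + 277) * 1000 + 378) * 1000 + 560) * (((s - 1) ^+ 2) ^+ 7 * s ^+ 6) + (((50 * 1000 + 177) * 1000 + 390) * 1000 + 592) * (((s - 1) ^+ 2) ^+ 8 * s ^+ 5) + (((14 * 1000 + 239) * 1000 + 411) * 1000 + 200) * (((s - 1) ^+ 2) ^+ 9 * s ^+ 4) + (((2 * 1000 + 885) * 1000 + 532) * 1000 + 672) * (((s - 1) ^+ 2) ^+ 10 * s ^+ 3) + ((396 * 1000 + 561) * 1000 + 920) * (((s - 1) ^+ 2) ^+ 11 * s ^+ 2) + ((33 * 1000 + 175) * 1000 + 168) * (((s - 1) ^+ 2) ^+ 12 * s ^+ 1) + ((1 * 1000 + 275) * 1000 + 968) * (((s - 1) ^+ 2) ^+ 13 *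 s ^+ 0) by nn.
by rewrite -subr_gt0 e; exact: ltr_wpDr t2 t1.
Qed.

Lemma vand_13_3 (R : realType) : hh R 13 3 0 + \sum_(i < 3) hh R 13 3 i.+1 = 'C(13, 3)%:R.
Proof. rewrite /hh !big_ord_recr big_ord0 /=; natnorm; ring. Qed.

Lemma H1_13_3 (R : realType) : Hs R 13 3 1 = 4 * 'C(13, 3)%:R.
Proof. rewrite HsE_13_3; natnorm; ring. Qed.

Lemma bnd0_13_3 (R : realType) :
  2 ^+ 13 * (Hs R 13 3 (1 / 4)) ^+ 2 < 16 * ('C(13, 3)%:R) ^+ 2.
Proof. rewrite HsE_13_3; natnorm; lra. Qed.

Lemma bnd1_13_3 (R : realType) :
  2 ^+ 13 * (Hs R 13 3 4) ^+ 2 < 16 * ('C(13, 3)%:R) ^+ 2 * 4 ^+ (2 * 13).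
Proof. rewrite HsE_13_3; natnorm; lra. Qed.

Lemma case_13_3 (R : realType) :
  [/\ @inK R 3 (zstar R 13 3),
      (forall w : kpoint R 3, @inK R 3 w -> w <> zstar R 13 3 ->
         @phi R 13 3 w < @phi R 13 3 (zstar R 13 3)) &
      @in_interior_K R 3 (zstar R 13 3)].
Proof.
apply: main_gen => //.
- exact: vand_13_3.
- exact: H1_13_3.
- exact: poly_13_3.
- exact: bnd0_13_3.
- exact: bnd1_13_3.
Qed.

Lemma HsE_14_3 (R : realType) (s : R) : Hs R 14 3 s = 2 * s ^+ 0 + 66 * s ^+ 2 + 330 * s ^+ 4 + 330 * s ^+ 6 + 330 * s ^+ 8 + 330 * s ^+ 10 + 66 * s ^+ 12 + 2 * s ^+ 14.
Proof. rewrite /Hs /hh /en !big_ord_recr big_ord0 !big_bool /=; natnorm; ring. Qed.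

Lemma poly_14_3 (R : realType) (s : R) : 0 < s -> s != 1 ->
  2 ^+ 14 * (Hs R 14 3 s) ^+ 2 < 16 * ('C(14, 3)%:R) ^+ 2 * (1 + s ^+ 2) ^+ 14.
Proof.
move=> s0 s1; rewrite HsE_14_3; natnorm.
have s0' : 0 <= s by apply: ltW.
have c1 : 0 < ((((2 * 1000 + 290) * 1000 + 89) * 1000 + 984) : R) by lra.
have e : 16 * (364 : R) ^+ 2 * (1 + s ^+ 2) ^+ 14 - 2 ^+ 14 * (2 * s ^+ 0 + 66 * s ^+ 2 + 330 * s ^+ 4 + 330 * s ^+ 6 + 330 * s ^+ 8 + 330 * s ^+ 10 + 66 * s ^+ 12 + 2 * s ^+ 14) ^+ 2
  = (((2 * 1000 + 290) * 1000 + 89) * 1000 + 984) * ((s - 1) ^+ 2 * s ^+ 13) + ((((102 * 1000 + 62) * 1000 + 96) * 1000 + 384) * (((s - 1) ^+ 2) ^+ 2 * s ^+ 12) + (((488 * 1000 + 122) * 1000 + 613) * 1000 + 760) * (((s - 1) ^+ 2) ^+ 3 * s ^+ 11) + ((((1 * 1000 + 60) * 1000 + 406) * 1000 + 296) * 1000 + 576) * (((s - 1) ^+ 2) ^+ 4 * s ^+ 10) + ((((1 * 1000 + 383) * 1000 + 886) * 1000 + 749) * 1000 + 696) * (((s - 1) ^+ 2) ^+ 5 * s ^+ 9) + ((((1 * 1000 + 220) * 1000 + 562) * 1000 + 321) * 1000 + 408) * (((s - 1) ^+ 2) ^+ 6 * s ^+ 8) + (((771 * 1000 + 426) * 1000 +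 91) * 1000 + 8) * (((s - 1) ^+ 2) ^+ 7 * s ^+ 7) + (((359 * 1000 + 519) * 1000 + 10) * 1000 + 816) * (((s - 1) ^+ 2) ^+ 8 * s ^+ 6) + (((124 * 1000 + 692) * 1000 + 480) * 1000 + 0) * (((s - 1) ^+ 2) ^+ 9 * s ^+ 5) + (((31 * 1000 + 957) * 1000 + 454) * 1000 + 848) * (((s - 1) ^+ 2) ^+ 10 * s ^+ 4) + (((5 * 1000 + 900) * 1000 + 623) * 1000 + 872) * (((s - 1) ^+ 2) ^+ 11 * s ^+ 3) + ((744 * 1000 + 393) * 1000 + 728) * (((s - 1) ^+ 2) ^+ 12 * s ^+ 2) + ((57 * 1000 + 523) * 1000 + 200) * (((s - 1) ^+ 2) ^+ 13 * s ^+ 1) + ((2 * 1000 + 54) * 1000 + 400) * (((s - 1) ^+ 2) ^+ 14 * s ^+ 0)).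
  ring.
have t1 : 0 < (((2 * 1000 + 290) * 1000 + 89) * 1000 + 984) * ((s - 1) ^+ 2 * s ^+ 13).
  apply: mulr_gt0; first exact: c1.
  by apply: mulr_gt0; [rewrite exprn_even_gt0 // subr_eq0 | apply: exprn_gt0].
have t2 : 0 <= (((102 * 1000 + 62) * 1000 + 96) * 1000 + 384) * (((s - 1) ^+ 2) ^+ 2 * s ^+ 12) + (((488 * 1000 + 122) * 1000 + 613) * 1000 + 760) * (((s - 1) ^+ 2) ^+ 3 * s ^+ 11) + ((((1 * 1000 + 60) * 1000 + 406) * 1000 + 296) * 1000 + 576) * (((s - 1) ^+ 2) ^+ 4 * s ^+ 10) + ((((1 * 1000 + 383) * 1000 + 886) * 1000 + 749) * 1000 + 696) * (((s - 1) ^+ 2) ^+ 5 * s ^+ 9) + ((((1 * 1000 + 220) * 1000 + 562) * 1000 + 321) * 1000 + 408) * (((s - 1) ^+ 2) ^+ 6 * s ^+ 8) + (((771 * 1000 + 426) * 1000 + 91) * 1000 + 8) * (((s - 1) ^+ 2) ^+ 7 * s ^+ 7) + (((359 * 1000 + 519) * 1000 + 10) * 1000 + 816) * (((s - 1) ^+ 2) ^+ 8 * s ^+ 6) + (((124 * 1000 + 692) * 1000 + 480) * 1000 + 0) * (((s - 1) ^+ 2) ^+ 9 * s ^+ 5) + (((31 * 1000 + 957) * 1000 + 454) * 1000 + 848) * (((s - 1) ^+ 2) ^+ 10 * s ^+ 4) + (((5 * 1000 + 900) * 1000 + 623) * 1000 + 872) * (((s - 1) ^+ 2) ^+ 11 *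 s ^+ 3) + ((744 * 1000 + 393) * 1000 + 728) * (((s - 1) ^+ 2) ^+ 12 * s ^+ 2) + ((57 * 1000 + 523) * 1000 + 200) * (((s - 1) ^+ 2) ^+ 13 * s ^+ 1) + ((2 * 1000 + 54) * 1000 + 400) * (((s - 1) ^+ 2) ^+ 14 * s ^+ 0) by nn.
by rewrite -subr_gt0 e; exact: ltr_wpDr t2 t1.
Qed.

Lemma vand_14_3 (R : realType) : hh R 14 3 0 + \sum_(i < 3) hh R 14 3 i.+1 = 'C(14, 3)%:R.
Proof. rewrite /hh !big_ord_recr big_ord0 /=; natnorm; ring. Qed.

Lemma H1_14_3 (R : realType) : Hs R 14 3 1 = 4 * 'C(14, 3)%:R.
Proof. rewrite HsE_14_3; natnorm; ring. Qed.

Lemma bnd0_14_3 (R : realType) :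
  2 ^+ 14 * (Hs R 14 3 (1 / 4)) ^+ 2 < 16 * ('C(14, 3)%:R) ^+ 2.
Proof. rewrite HsE_14_3; natnorm; lra. Qed.

Lemma bnd1_14_3 (R : realType) :
  2 ^+ 14 * (Hs R 14 3 4) ^+ 2 < 16 * ('C(14, 3)%:R) ^+ 2 * 4 ^+ (2 * 14).
Proof. rewrite HsE_14_3; natnorm; lra. Qed.

Lemma case_14_3 (R : realType) :
  [/\ @inK R 3 (zstar R 14 3),
      (forall w : kpoint R 3, @inK R 3 w -> w <> zstar R 14 3 ->
         @phi R 14 3 w < @phi R 14 3 (zstar R 14 3)) &
      @in_interior_K R 3 (zstar R 14 3)].
Proof.
apply: main_gen => //.
- exact: vand_14_3.
- exact: H1_14_3.
- exact: poly_14_3.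
- exact: bnd0_14_3.
- exact: bnd1_14_3.
Qed.

Lemma HsE_17_4 (R : realType) (s : R) : Hs R 17 4 s = 2 * s ^+ 0 + 104 * s ^+ 2 + 936 * s ^+ 4 + (2 * 1000 + 288) * s ^+ 6 + (1 * 1000 + 430) * s ^+ 8 + (1 * 1000 + 430) * s ^+ 9 + (2 * 1000 + 288) * s ^+ 11 + 936 * s ^+ 13 + 104 * s ^+ 15 + 2 * s ^+ 17.
Proof. rewrite /Hs /hh /en !big_ord_recr big_ord0 !big_bool /=; natnorm; ring. Qed.

Lemma poly_17_4 (R : realType) (s : R) : 0 < s -> s != 1 ->
  2 ^+ 17 * (Hs R 17 4 s) ^+ 2 < 16 * ('C(17, 4)%:R) ^+ 2 * (1 + s ^+ 2) ^+ 17.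
Proof.
move=> s0 s1; rewrite HsE_17_4; natnorm.
have s0' : 0 <= s by apply: ltW.
have c1 : 0 < (((((5 * 1000 + 764) * 1000 + 861) * 1000 + 132) * 1000 + 800) : R) by lra.
have e : 16 * (2380 : R) ^+ 2 * (1 + s ^+ 2) ^+ 17 - 2 ^+ 17 * (2 * s ^+ 0 + 104 * s ^+ 2 + 936 * s ^+ 4 + (2 * 1000 + 288) * s ^+ 6 + (1 * 1000 + 430) * s ^+ 8 + (1 * 1000 + 430) * s ^+ 9 + (2 * 1000 + 288) * s ^+ 11 + 936 * s ^+ 13 + 104 * s ^+ 15 + 2 * s ^+ 17) ^+ 2
  = ((((5 * 1000 + 764) * 1000 + 861) * 1000 + 132) * 1000 + 800) * ((s - 1) ^+ 2 * s ^+ 16) + (((((81 * 1000 + 851) * 1000 + 339) * 1000 + 243) * 1000 + 520) * (((s - 1) ^+ 2) ^+ 2 * s ^+ 15) + ((((388 * 1000 + 454) * 1000 + 751) * 1000 + 928) * 1000 + 320) * (((s - 1) ^+ 2) ^+ 3 * s ^+ 14) + ((((980 * 1000 + 568) * 1000 + 137) * 1000 + 269) * 1000 + 248) * (((s - 1) ^+ 2) ^+ 4 * s ^+ 13) + (((((1 * 1000 + 589) * 1000 + 629) * 1000 + 729) * 1000 + 898) * 1000 + 496) * (((s - 1) ^+ 2) ^+ 5 * s ^+ 12) + (((((1 * 1000 + 821) * 1000 + 945) * 1000 + 863) * 1000 + 602) * 1000 + 176) * (((s - 1) ^+ 2) ^+ 6 * s ^+ 11) + (((((1 * 1000 + 558)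 * 1000 + 927) * 1000 + 198) * 1000 + 126) * 1000 + 80) * (((s - 1) ^+ 2) ^+ 7 * s ^+ 10) + (((((1 * 1000 + 27) * 1000 + 897) * 1000 + 12) * 1000 + 518) * 1000 + 912) * (((s - 1) ^+ 2) ^+ 8 * s ^+ 9) + ((((531 * 1000 + 520) * 1000 + 628) * 1000 + 326) * 1000 + 400) * (((s - 1) ^+ 2) ^+ 9 * s ^+ 8) + ((((217 * 1000 + 139) * 1000 + 172) * 1000 + 343) * 1000 + 808) * (((s - 1) ^+ 2) ^+ 10 * s ^+ 7) + ((((70 * 1000 + 7) * 1000 + 326) * 1000 + 638) * 1000 + 80) * (((s - 1) ^+ 2) ^+ 11 * s ^+ 6) + ((((17 * 1000 + 646) * 1000 + 444) * 1000 + 707) * 1000 + 840) * (((s - 1) ^+ 2) ^+ 12 * s ^+ 5) + ((((3 * 1000 + 410) * 1000 + 930) * 1000 + 352) * 1000 + 128) * (((s - 1) ^+ 2) ^+ 13 * s ^+ 4) + (((488 * 1000 + 808) * 1000 + 857) * 1000 + 600) * (((s - 1) ^+ 2) ^+ 14 * s ^+ 3) + (((48 * 1000 + 972) * 1000 + 111) * 1000 + 872) * (((s - 1) ^+ 2) ^+ 15 * s ^+ 2) + (((3 * 1000 + 63) * 1000 + 607) * 1000 + 808) * (((s - 1) ^+ 2) ^+ 16 * s ^+ 1) + ((90 * 1000 + 106) * 1000 + 112) * (((s - 1) ^+ 2) ^+ 17 * s ^+ 0)).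
  ring.
have t1 : 0 < ((((5 * 1000 + 764) * 1000 + 861) * 1000 + 132) * 1000 + 800) * ((s - 1) ^+ 2 * s ^+ 16).
  apply: mulr_gt0; first exact: c1.
  by apply: mulr_gt0; [rewrite exprn_even_gt0 // subr_eq0 | apply: exprn_gt0].
have t2 : 0 <= ((((81 * 1000 + 851) * 1000 + 339) * 1000 + 243) * 1000 + 520) * (((s - 1) ^+ 2) ^+ 2 * s ^+ 15) + ((((388 * 1000 + 454) * 1000 + 751) * 1000 + 928) * 1000 + 320) * (((s - 1) ^+ 2) ^+ 3 * s ^+ 14) + ((((980 * 1000 + 568) * 1000 + 137) * 1000 + 269) * 1000 + 248) * (((s - 1) ^+ 2) ^+ 4 * s ^+ 13) + (((((1 * 1000 + 589) * 1000 + 629) * 1000 + 729) * 1000 + 898) * 1000 + 496) * (((s - 1) ^+ 2) ^+ 5 * s ^+ 12) + (((((1 * 1000 + 821) * 1000 + 945) * 1000 + 863) * 1000 + 602) * 1000 + 176) * (((s - 1) ^+ 2) ^+ 6 * s ^+ 11) + (((((1 * 1000 + 558) * 1000 + 927) * 1000 + 198) * 1000 + 126) * 1000 + 80) * (((s - 1) ^+ 2) ^+ 7 * s ^+ 10) + (((((1 * 1000 + 27) * 1000 + 897) * 1000 + 12) * 1000 + 518) * 1000 + 912) * (((s - 1) ^+ 2) ^+ 8 * s ^+ 9) + ((((531 * 1000 + 520) * 1000 + 628) * 1000 + 326) * 1000 + 400) * (((s - 1) ^+ 2) ^+ 9 * s ^+ 8) + ((((217 * 1000 + 139) * 1000 +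 172) * 1000 + 343) * 1000 + 808) * (((s - 1) ^+ 2) ^+ 10 * s ^+ 7) + ((((70 * 1000 + 7) * 1000 + 326) * 1000 + 638) * 1000 + 80) * (((s - 1) ^+ 2) ^+ 11 * s ^+ 6) + ((((17 * 1000 + 646) * 1000 + 444) * 1000 + 707) * 1000 + 840) * (((s - 1) ^+ 2) ^+ 12 * s ^+ 5) + ((((3 * 1000 + 410) * 1000 + 930) * 1000 + 352) * 1000 + 128) * (((s - 1) ^+ 2) ^+ 13 * s ^+ 4) + (((488 * 1000 + 808) * 1000 + 857) * 1000 + 600) * (((s - 1) ^+ 2) ^+ 14 * s ^+ 3) + (((48 * 1000 + 972) * 1000 + 111) * 1000 + 872) * (((s - 1) ^+ 2) ^+ 15 * s ^+ 2) + (((3 * 1000 + 63) * 1000 + 607) * 1000 + 808) * (((s - 1) ^+ 2) ^+ 16 * s ^+ 1) + ((90 * 1000 + 106) * 1000 + 112) * (((s - 1) ^+ 2) ^+ 17 * s ^+ 0) by nn.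
by rewrite -subr_gt0 e; exact: ltr_wpDr t2 t1.
Qed.

Lemma vand_17_4 (R : realType) : hh R 17 4 0 + \sum_(i < 4) hh R 17 4 i.+1 = 'C(17, 4)%:R.
Proof. rewrite /hh !big_ord_recr big_ord0 /=; natnorm; ring. Qed.

Lemma H1_17_4 (R : realType) : Hs R 17 4 1 = 4 * 'C(17, 4)%:R.
Proof. rewrite HsE_17_4; natnorm; ring. Qed.

Lemma bnd0_17_4 (R : realType) :
  2 ^+ 17 * (Hs R 17 4 (1 / 4)) ^+ 2 < 16 * ('C(17, 4)%:R) ^+ 2.
Proof. rewrite HsE_17_4; natnorm; lra. Qed.

Lemma bnd1_17_4 (R : realType) :
  2 ^+ 17 * (Hs R 17 4 4) ^+ 2 < 16 * ('C(17, 4)%:R) ^+ 2 * 4 ^+ (2 * 17).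
Proof. rewrite HsE_17_4; natnorm; lra. Qed.

Lemma case_17_4 (R : realType) :
  [/\ @inK R 4 (zstar R 17 4),
      (forall w : kpoint R 4, @inK R 4 w -> w <> zstar R 17 4 ->
         @phi R 17 4 w < @phi R 17 4 (zstar R 17 4)) &
      @in_interior_K R 4 (zstar R 17 4)].
Proof.
apply: main_gen => //.
- exact: vand_17_4.
- exact: H1_17_4.
- exact: poly_17_4.
- exact: bnd0_17_4.
- exact: bnd1_17_4.
Qed.


Theorem lemma4p4 (R : realType) (d p : nat) :
  ((d = 6 /\ p = 1) \/ (d = 10 /\ p = 2) \/ (d = 13 /\ p = 3) \/
   (d = 14 /\ p = 3) \/ (d = 17 /\ p = 4))%N ->
  [/\ @inK R p (zstar R d p),
      (forall w : kpoint R p, @inK R p w -> w <> zstar R d p ->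
         @phi R d p w < @phi R d p (zstar R d p)) &
      @in_interior_K R p (zstar R d p)].
Proof.
case=> [[-> ->]|[[-> ->]|[[-> ->]|[[-> ->]|[-> ->]]]]].
- exact: case_6_1.
- exact: case_10_2.
- exact: case_13_3.
- exact: case_14_3.
- exact: case_17_4.
Qed.
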